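(* Let $\{w^k\}$ be generated by the L-GADMM iteration and $\{\bar w^k\}$ be the auxiliary sequence. For any integer $t>0$ let $w_t=\frac1{t+1}\sum_{k=0}^t\bar w^k$ and let $u_t$ be its $u$-part (its first $m$ blocks). Then $w_t\in\mathcal{W}$ and $$\theta(u_t)-\theta(u)+(w_t-w)^\top F(w)\le\frac{1}{2(t+1)}\|w-w^0\|_H^2\qquad\forall w\in\mathcal{W}.$$
   Context: Standing setting. Let $m\ge 2$, $\ell$, $n_1,\dots,n_m$ be positive integers. For $i=1,\dots,m$ let $\theta_i:\mathbb{R}^{n_i}\to\mathbb{R}$ be convex, $\mathcal{X}_i\subseteq\mathbb{R}^{n_i}$ nonempty closed convex, $A_i\in\mathbb{R}^{\ell\times n_i}$ of full column rank, and $b\in\mathbb{R}^\ell$. Problem (P): $\min\{\sum_{i=1}^m\theta_i(x_i):\sum_{i=1}^mA_ix_i=b,\ x_i\in\mathcal{X}_i\}$, assumed to have a nonempty solution set. Write $u=(x_1,\dots,x_m)$, $w=(x_1,\dots,x_m,y)$ with $y\in\mathbb{R}^\ell$, $\theta(u)=\sum_i\theta_i(x_i)$, $F(w)=(-A_1^\top y,\dots,-A_m^\top y,\ \sum_iA_ix_i-b)$, $\mathcal{W}=\mathcal{X}_1\times\cdots\times\mathcal{X}_m\times\mathbb{R}^\ell$, and $\mathcal{W}^*=\{w^*\in\mathcal{W}:\theta(u)-\theta(u^* )+(w-w^* )^\top F(w^* )\ge0\ \forall w\in\mathcal{W}\}$ (nonempty). For symmetric $G$, $\|v\|_G^2:=v^\top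 Gv$; $\|\cdot\|$ is the Euclidean norm. Vectors are partitioned as $w=(R,x_m,y)$ with $R=(x_1,\dots,x_{m-1})$. Parameters: $\rho>0$, $\gamma\in(0,2)$, symmetric positive definite $P_i\in\mathbb{R}^{n_i\times n_i}$ ($i=1,\dots,m$) such that $G_1\succ0$, where $G_1$ is the symmetric block matrix with diagonal blocks $P_1,\dots,P_{m-1}$ and $(i,j)$ block $-\rho A_i^\top A_j$ for $i\ne j$, $1\le i,j\le m-1$. Matrices (w.r.t. the partition $(R,x_m,y)$): $Q=\begin{pmatrix}G_1&0&0\\0&\rho A_m^\top A_m+P_m&(1-\gamma)A_m^\top\\0&-A_m&\frac1\rho I_\ell\end{pmatrix}$, $M=\begin{pmatrix}I&0&0\\0&I_{n_m}&0\\0&-\rho A_m&\gamma I_\ell\end{pmatrix}$, $H=\begin{pmatrix}G_1&0&0\\0&P_m+\frac\rho\gamma A_m^\top A_m&\frac{1-\gamma}\gamma A_m^\top\\0&\frac{1-\gamma}\gamma A_m&\frac1{\gamma\rho}I_\ell\end{pmatrix}$, $N=Q^\top+Q-M^\top HM$. L-GADMM iteration: from an arbitrary $w^0=(x_1^0,\dots,x_m^0,y^0)\in\mathcal{W}$, for $k=0,1,2,\dots$: $x_j^{k+1}=\arg\min_{x_j\in\mathcal{X}_j}\{\theta_j(x_j)+\frac\rho2\|A_jx_j+\sum_{i=1,i\ne j}^mA_ix_i^k-b-\frac{y^k}\rho\|^2+\frac12\|x_j-x_j^k\|_{P_j}^2\}$ for $j=1,\dots,m-1$; $x_m^{k+1}=\arg\min_{x_m\in\mathcal{X}_m}\{\theta_m(x_m)+\frac\rho2\|\gamma\sum_{i=1}^{m-1}A_ix_i^{k+1}+(1-\gamma)(b-A_mx_m^k)+A_mx_m-b-\frac{y^k}\rho\|^2+\frac12\|x_m-x_m^k\|_{P_m}^2\}$;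 $y^{k+1}=y^k-\rho\big(\gamma\sum_{i=1}^{m-1}A_ix_i^{k+1}+(1-\gamma)(b-A_mx_m^k)+A_mx_m^{k+1}-b\big)$. Auxiliary sequence: $\bar w^k=(\bar x_1^k,\dots,\bar x_m^k,\bar y^k)$ with $\bar x_i^k=x_i^{k+1}$ ($i=1,\dots,m$) and $\bar y^k=y^k-\rho(\sum_{i=1}^{m-1}A_ix_i^{k+1}+A_mx_m^k-b)$; $\bar u^k=(\bar x_1^k,\dots,\bar x_m^k)$, $R^k=(x_1^k,\dots,x_{m-1}^k)$, $\bar R^k=(\bar x_1^k,\dots,\bar x_{m-1}^k)$. *)

(* Defs.v *)
From HB Require Import structures.
From mathcomp Require Import all_boot all_order all_algebra.
From mathcomp Require Import all_classical all_reals all_analysis.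
Unset Printing Implicit Defensive.
Import Order.TTheory GRing.Theory Num.Theory.
Import numFieldNormedType.Exports.
Local Open Scope ring_scope.
Local Open Scope classical_set_scope.

Section LGADMM.
Variable R : realType.

Definition vdot {k : nat} (u v : 'cV[R]_k) : R := \sum_(i < k) u i 0 * v i 0.

Definition sqnorm {k : nat} (v : 'cV[R]_k) : R := vdot v v.

Definition sqnormG {k : nat} (G : 'M[R]_k) (v : 'cV[R]_k) : R := vdot v (G *m v).

Definition spd {k : nat} (G : 'M[R]_k) : Prop :=
  G^T = G /\ forall v : 'cV[R]_k, v != 0 -> 0 < vdot v (G *m v).

Definition cvx_fun {k : nat} (f : 'cV[R]_k -> R) : Prop :=
  forall (x y : 'cV[R]_k) (s : R), 0 <= s <= 1 ->
    f (s *: x + (1 - s) *: y) <= s * f x + (1 - s) * f y.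

Definition cvx_set {k : nat} (X : set 'cV[R]_k) : Prop :=
  forall (x y : 'cV[R]_k) (s : R), X x -> X y -> 0 <= s <= 1 ->
    X (s *: x + (1 - s) *: y).

Definition is_argmin {T : Type} (X : set T) (f : T -> R) (x : T) : Prop :=
  X x /\ forall z, X z -> f x <= f z.

(* Blocks are indexed by 'I_m.+1, i.e. the paper's m is m.+1 here;
   the last block (paper's x_m) is ord_max, and the paper's R-part
   (x_1,...,x_{m-1}) consists of the indices i != ord_max. *)
Variables (m l : nat) (n : 'I_m.+1 -> nat).
Variable A : forall i : 'I_m.+1, 'M[R]_(l, n i).
Variable b : 'cV[R]_l.
Variable theta : forall i : 'I_m.+1, 'cV[R]_(n i) -> R.
Variable X : forall i : 'I_m.+1, set 'cV[R]_(n i).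

Local Notation block_vec := (forall i : 'I_m.+1, 'cV[R]_(n i)).

Definition theta_sum (u : block_vec) : R := \sum_(i < m.+1) theta i (u i).

Definition Asum (u : block_vec) : 'cV[R]_l := \sum_(i < m.+1) A i *m u i.

Definition Asum_R (u : block_vec) : 'cV[R]_l :=
  \sum_(i < m.+1 | i != ord_max) A i *m u i.

Definition in_W (u : block_vec) (y : 'cV[R]_l) : Prop := forall i, X i (u i).

(* (w' - w)^T F(w) with w' = (u', y'), w = (u, y),
   F(w) = (-A_1^T y, ..., -A_m^T y, sum_i A_i x_i - b) *)
Definition VI_term (u' : block_vec) (y' : 'cV[R]_l)
    (u : block_vec) (y : 'cV[R]_l) : R :=
  \sum_(i < m.+1) vdot (u' i - u i) (- ((A i)^T *m y))
  + vdot (y' - y) (Asum u - b).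

Definition in_Wstar (us : block_vec) (ys : 'cV[R]_l) : Prop :=
  in_W us ys /\ forall (u : block_vec) (y : 'cV[R]_l), in_W u y ->
    0 <= theta_sum u - theta_sum us + VI_term u y us ys.

Variables (rho gamma : R).
Variable P : forall i : 'I_m.+1, 'M[R]_(n i).

(* ||R||_{G_1}^2, where G_1 has diagonal blocks P_1..P_{m-1} and
   off-diagonal (i,j) block -rho A_i^T A_j (1 <= i,j <= m-1, i <> j) *)
Definition G1form (d : block_vec) : R :=
  \sum_(i < m.+1 | i != ord_max) vdot (d i) (P i *m d i)
  + \sum_(i < m.+1 | i != ord_max) \sum_(j < m.+1 | (j != ord_max) && (j != i))
      vdot (d i) ((- rho) *: ((A i)^T *m (A j *m d j))).

Definition G1_pd : Prop :=
  forall d : block_vec, (exists i, (i != ord_max) /\ d i != 0) -> 0 < G1form d.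

(* ||w' - w||_H^2 written out blockwise w.r.t. the partition (R, x_m, y) *)
Definition Hform (u' : block_vec) (y' : 'cV[R]_l)
    (u : block_vec) (y : 'cV[R]_l) : R :=
  let d := fun i => u' i - u i in
  let dm := d ord_max in
  let dy := y' - y in
  G1form d
  + vdot dm ((P ord_max + (rho / gamma) *: ((A ord_max)^T *m A ord_max)) *m dm)
  + vdot dm (((1 - gamma) / gamma) *: ((A ord_max)^T *m dy))
  + vdot dy (((1 - gamma) / gamma) *: (A ord_max *m dm))
  + vdot dy ((gamma * rho)^-1 *: dy).

Definition LGADMM_seq (x : nat -> block_vec) (y : nat -> 'cV[R]_l) : Prop :=
  in_W (x 0%N) (y 0%N) /\
  forall k : nat,
    (forall j : 'I_m.+1, j != ord_max ->
       is_argmin (X j)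
         (fun z => theta j z
            + rho / 2 * sqnorm (A j *m z
                 + \sum_(i < m.+1 | i != j) A i *m x k i - b - rho^-1 *: y k)
            + 1 / 2 * sqnormG (P j) (z - x k j))
         (x k.+1 j))
    /\ is_argmin (X ord_max)
         (fun z => theta ord_max z
            + rho / 2 * sqnorm (gamma *: Asum_R (x k.+1)
                 + (1 - gamma) *: (b - A ord_max *m x k ord_max)
                 + A ord_max *m z - b - rho^-1 *: y k)
            + 1 / 2 * sqnormG (P ord_max) (z - x k ord_max))
         (x k.+1 ord_max)
    /\ y k.+1 = y k - rho *: (gamma *: Asum_R (x k.+1)
                 + (1 - gamma) *: (b - A ord_max *m x k ord_max)
                 + A ord_max *m x k.+1 ord_max - b).

Definition xbar (x : nat -> block_vec) (k : nat) : block_vec := x k.+1.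
Definition ybar (x : nat -> block_vec) (y : nat -> 'cV[R]_l) (k : nat) : 'cV[R]_l :=
  y k - rho *: (Asum_R (x k.+1) + A ord_max *m x k ord_max - b).

Definition xavg (x : nat -> block_vec) (t : nat) : block_vec :=
  fun i => (t.+1%:R)^-1 *: \sum_(k < t.+1) xbar x k i.
Definition yavg (x : nat -> block_vec) (y : nat -> 'cV[R]_l) (t : nat) : 'cV[R]_l :=
  (t.+1%:R)^-1 *: \sum_(k < t.+1) ybar x y k.

End LGADMM.

Definition block_vec (R : realType) (m : nat) (n : 'I_m.+1 -> nat) :=
  forall i : 'I_m.+1, 'cV[R]_(n i).

(* Main.v *)
Require Import Defs.
From HB Require Import structures.
From mathcomp Require Import all_boot all_order all_algebra.
From mathcomp Require Import all_classical all_reals all_analysis.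
From mathcomp Require Import ring lra.
Import Order.TTheory GRing.Theory Num.Theory.
Import numFieldNormedType.Exports.
Local Open Scope ring_scope.
Local Open Scope classical_set_scope.
Set Implicit Arguments.
Unset Strict Implicit.
Unset Printing Implicit Defensive.


Section Basic.
Variable R : realType.
Local Notation vdot := (vdot R).

Lemma vdotC k (u v : 'cV[R]_k) : vdot u v = vdot v u.
Proof. by rewrite /Defs.vdot; apply: eq_bigr => i _; rewrite mulrC. Qed.

Lemma vdotDl k (u v w : 'cV[R]_k) : vdot (u + v) w = vdot u w + vdot v w.
Proof. by rewrite /Defs.vdot -big_split; apply: eq_bigr => i _; rewrite mxE mulrDl. Qed.

Lemma vdotZl k a (u w : 'cV[R]_k) : vdot (a *: u) w = a * vdot u w.
Proof. by rewrite /Defs.vdot mulr_sumr; apply: eq_bigr => i _; rewrite mxE mulrA. Qed.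

Lemma vdotNl k (u w : 'cV[R]_k) : vdot (- u) w = - vdot u w.
Proof. by rewrite /Defs.vdot -sumrN; apply: eq_bigr => i _; rewrite mxE mulNr. Qed.

Lemma vdot0l k (w : 'cV[R]_k) : vdot 0 w = 0.
Proof. by rewrite /Defs.vdot big1 // => i _; rewrite mxE mul0r. Qed.

Lemma vdotBl k (u v w : 'cV[R]_k) : vdot (u - v) w = vdot u w - vdot v w.
Proof. by rewrite vdotDl vdotNl. Qed.

Lemma vdotDr k (u v w : 'cV[R]_k) : vdot w (u + v) = vdot w u + vdot w v.
Proof. by rewrite !(vdotC w) vdotDl. Qed.
Lemma vdotZr k a (u w : 'cV[R]_k) : vdot w (a *: u) = a * vdot w u.
Proof. by rewrite !(vdotC w) vdotZl. Qed.
Lemma vdotNr k (u w : 'cV[R]_k) : vdot w (- u) = - vdot w u.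
Proof. by rewrite !(vdotC w) vdotNl. Qed.
Lemma vdotBr k (u v w : 'cV[R]_k) : vdot w (u - v) = vdot w u - vdot w v.
Proof. by rewrite !(vdotC w) vdotBl. Qed.
Lemma vdot0r k (w : 'cV[R]_k) : vdot w 0 = 0.
Proof. by rewrite vdotC vdot0l. Qed.

Lemma vdot_suml k I (r : seq I) (Pr : pred I) (f : I -> 'cV[R]_k) w :
  vdot (\sum_(i <- r | Pr i) f i) w = \sum_(i <- r | Pr i) vdot (f i) w.
Proof. exact: (big_morph (fun u => vdot u w) (fun a b => vdotDl a b w) (vdot0l w)). Qed.

Lemma vdot_sumr k I (r : seq I) (Pr : pred I) (f : I -> 'cV[R]_k) w :
  vdot w (\sum_(i <- r | Pr i) f i) = \sum_(i <- r | Pr i) vdot w (f i).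
Proof. by rewrite vdotC vdot_suml; apply: eq_bigr => i _; rewrite vdotC. Qed.

Lemma vdotE k (u v : 'cV[R]_k) : vdot u v = (u^T *m v) 0 0.
Proof. by rewrite /Defs.vdot mxE; apply: eq_bigr => i _; rewrite mxE. Qed.

Lemma vdot_mulmx p q (M : 'M[R]_(p, q)) u v : vdot u (M *m v) = vdot (M^T *m u) v.
Proof. by rewrite !vdotE trmx_mul trmxK mulmxA. Qed.

Lemma vdot_sym k (M : 'M[R]_k) u v : M^T = M -> vdot u (M *m v) = vdot v (M *m u).
Proof. by move=> HM; rewrite vdot_mulmx HM vdotC. Qed.

Lemma vdot_ge0 k (u : 'cV[R]_k) : 0 <= vdot u u.
Proof. by rewrite /Defs.vdot; apply: sumr_ge0 => i _; rewrite -expr2 sqr_ge0. Qed.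

Lemma spd_ge0 k (M : 'M[R]_k) u : spd R M -> 0 <= vdot u (M *m u).
Proof.
case=> _ H; have [->|nz] := eqVneq u 0; first by rewrite vdot0l.
by apply/ltW/H.
Qed.

Lemma sq_expand k (r w : 'cV[R]_k) s :
  vdot (r + s *: w) (r + s *: w) = vdot r r + 2 * s * vdot r w + s ^+ 2 * vdot w w.
Proof. rewrite !vdotDl !vdotDr !vdotZl !vdotZr (vdotC w r); ring. Qed.

Lemma lim0 (a c : R) : (forall s, 0 < s -> s <= 1 -> 0 <= a + s * c) -> 0 <= a.
Proof.
move=> H; rewrite leNgt; apply/negP => a0.
have [c0|c0] := lerP c 0.
  by have := H 1 ltr01 (lexx _); rewrite mul1r; lra.
have [s1|s1] := lerP (- a / (2 * c)) 1.
  have sp : 0 < - a / (2 * c) by apply: divr_gt0; lra.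
  have := H _ sp s1.
  have -> : - a / (2 * c) * c = - a / 2.
    by field; apply/lt0r_neq0.
  lra.
have := H 1 ltr01 (lexx _); rewrite mul1r.
move: s1; rewrite ltr_pdivlMr; last lra.
lra.
Qed.

Lemma avg_step (N : nat) : 
  let s := (N.+1%:R / N.+2%:R : R) in
  s * (N.+1%:R)^-1 = (N.+2%:R)^-1 /\ 1 - s = (N.+2%:R)^-1 /\ 0 <= s <= 1.
Proof.
move=> s.
have h1 : (N.+1%:R : R) != 0 by rewrite pnatr_eq0.
have h2 : (N.+2%:R : R) != 0 by rewrite pnatr_eq0.
split; first by rewrite /s; field; do ?[apply/andP; split]; apply/lt0r_neq0; have := ler0n R N; lra.
split; first by rewrite /s; field; do ?[apply/andP; split]; apply/lt0r_neq0; have := ler0n R N; lra.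
rewrite /s; apply/andP; split; first by apply: divr_ge0.
by rewrite ler_pdivrMr ?ltr0n // mul1r ler_nat.
Qed.

Lemma avg_in k (C : set 'cV[R]_k) (z : nat -> 'cV[R]_k) (N : nat) :
  cvx_set R C -> (forall j, (j <= N)%N -> C (z j)) ->
  C ((N.+1%:R)^-1 *: \sum_(j < N.+1) z j).
Proof.
move=> hC; elim: N => [|N IH] hz.
  by rewrite big_ord1 invr1 scale1r; apply: hz.
have [e1 [e2 e3]] := avg_step N.
set s := _ / _ in e1 e2 e3.
have -> : (N.+2%:R)^-1 *: \sum_(j < N.+2) z j =
   s *: ((N.+1%:R)^-1 *: \sum_(j < N.+1) z j) + (1 - s) *: z N.+1.
  by rewrite big_ord_recr /= scalerA e1 e2 scalerDr.
apply: hC => //; last exact: hz.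
by apply: IH => j hj; apply: hz; apply: leqW.
Qed.

Lemma jensen k (f : 'cV[R]_k -> R) (z : nat -> 'cV[R]_k) (N : nat) :
  cvx_fun R f ->
  f ((N.+1%:R)^-1 *: \sum_(j < N.+1) z j) <= (N.+1%:R)^-1 * \sum_(j < N.+1) f (z j).
Proof.
move=> hf; elim: N => [|N IH].
  by rewrite !big_ord1 invr1 scale1r mul1r.
have [e1 [e2 e3]] := avg_step N.
set s := _ / _ in e1 e2 e3.
have -> : (N.+2%:R)^-1 *: \sum_(j < N.+2) z j =
   s *: ((N.+1%:R)^-1 *: \sum_(j < N.+1) z j) + (1 - s) *: z N.+1.
  by rewrite big_ord_recr /= scalerA e1 e2 scalerDr.
apply: le_trans (hf _ _ _ e3) _.
rewrite [in X in _ <= X]big_ord_recr /= e2 mulrDr lerD2r.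
move: e3 => /andP [s0 s1].
by apply: (le_trans (ler_wpM2l s0 IH)); rewrite mulrA e1.
Qed.

End Basic.

Section VI.
Variable R : realType.
Local Notation vdot := (vdot R).

Lemma argmin_vi p q (Xs : set 'cV[R]_p) (th : 'cV[R]_p -> R) (A : 'M[R]_(q,p))
  (c : 'cV[R]_q) (P : 'M[R]_p) (z0 zs : 'cV[R]_p) (rho : R) (F : 'cV[R]_p -> R) :
  cvx_fun R th -> cvx_set R Xs -> P^T = P ->
  (forall z, F z = th z + rho / 2 * sqnorm R (A *m z + c) + 1 / 2 * sqnormG R P (z - z0)) ->
  is_argmin R Xs F zs -> forall z, Xs z ->
  0 <= th z - th zs + rho * vdot (A *m (z - zs)) (A *m zs + c)
       + vdot (z - zs) (P *m (zs - z0)).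
Proof.
move=> hth hX hP HF [Xzs Hmin] z Xz.
set d := z - zs.
apply: (@lim0 _ _ (rho / 2 * vdot (A *m d) (A *m d) + 1 / 2 * vdot d (P *m d))) => s s0 s1.
have s01 : 0 <= s <= 1 by apply/andP; split => //; apply: ltW.
have Xt := hX _ _ _ Xz Xzs s01.
have e : s *: z + (1 - s) *: zs = zs + s *: d.
  by apply/matrixP => i j; rewrite !mxE; ring.
have h1 := Hmin _ Xt.
have h2 := hth z zs s s01.
rewrite e in h1 h2; rewrite !HF in h1.
have e2 : A *m (zs + s *: d) + c = (A *m zs + c) + s *: (A *m d).
  by rewrite mulmxDr scalemxAr addrAC.
have e3 : zs + s *: d - z0 = (zs - z0) + s *: d by rewrite addrAC.
rewrite /sqnorm /sqnormG e2 e3 sq_expand in h1.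
move: h1; move: (A *m zs + c) (zs - z0) => r ee h1.
rewrite (mulmxDr P ee) -scalemxAr !vdotDl !vdotDr !vdotZl !vdotZr in h1.
rewrite (vdot_sym ee d hP) (vdotC r) in h1.
have key : 0 <= s * (th z - th zs + rho * vdot (A *m d) r +
     vdot d (P *m ee) + s * (rho / 2 * vdot (A *m d) (A *m d) + 1 / 2 * vdot d (P *m d))).
  lra.
by rewrite pmulr_rge0 in key.
Qed.

End VI.

Section Forms.
Variable R : realType.
Local Notation vdot := (vdot R).
Variables (m l : nat) (n : 'I_m.+1 -> nat).
Variable A : forall i : 'I_m.+1, 'M[R]_(l, n i).
Variables (rho gamma : R).
Variable P : forall i : 'I_m.+1, 'M[R]_(n i).
Local Notation bv := (forall i : 'I_m.+1, 'cV[R]_(n i)).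

Definition B1 (d e : bv) : R :=
  \sum_(i < m.+1 | i != ord_max) vdot (d i) (P i *m e i)
  + \sum_(i < m.+1 | i != ord_max) \sum_(j < m.+1 | (j != ord_max) && (j != i))
      vdot (d i) ((- rho) *: ((A i)^T *m (A j *m e j))).

Lemma G1B d : G1form R m l n A rho P d = B1 d d.
Proof. by []. Qed.

Lemma B1_ext d d' e e' : (forall i, d i = d' i) -> (forall i, e i = e' i) ->
  B1 d e = B1 d' e'.
Proof.
move=> hd he; rewrite /B1; congr (_ + _); apply: eq_bigr => i _.
  by rewrite hd he.
by apply: eq_bigr => j _; rewrite hd he.
Qed.

Lemma B1Bl d e f : B1 (fun i => d i - e i) f = B1 d f - B1 e f.
Proof.
rewrite /B1.
under eq_bigr => i _ do rewrite vdotBl.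
under [X in _ + X = _]eq_bigr => i _ do under eq_bigr => j _ do rewrite vdotBl.
under [X in _ + X = _]eq_bigr => i _ do rewrite sumrB.
rewrite !sumrB; ring.
Qed.

Lemma B1C d e : (forall i, (P i)^T = P i) -> B1 d e = B1 e d.
Proof.
move=> hP; rewrite /B1; congr (_ + _).
  by apply: eq_bigr => i _; rewrite vdot_sym.
have h : forall (d e : bv) i j, vdot (d i) ((- rho) *: ((A i)^T *m (A j *m e j)))
   = - rho * vdot (A i *m d i) (A j *m e j).
  by move=> d0 e0 i j; rewrite vdotZr vdot_mulmx trmxK.
under eq_bigr => i _ do under eq_bigr => j _ do rewrite h.
under [RHS]eq_bigr => i _ do under eq_bigr => j _ do rewrite h.
rewrite (exchange_big_dep (fun j => j != ord_max)) /=; last first.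
  by move=> i j _ /andP[].
apply: eq_bigr => j hj; apply: eq_big.
  by move=> i; rewrite hj /= (eq_sym j).
by move=> i _; rewrite vdotC.
Qed.

Lemma B1Br d e f : (forall i, (P i)^T = P i) ->
  B1 f (fun i => d i - e i) = B1 f d - B1 f e.
Proof. by move=> hP; rewrite B1C // B1Bl // !(B1C f). Qed.

Lemma G1formB d e : (forall i, (P i)^T = P i) ->
  G1form R m l n A rho P (fun i => d i - e i) =
  G1form R m l n A rho P d - 2 * B1 d e + G1form R m l n A rho P e.
Proof.
move=> hP; rewrite (G1B (fun i => d i - e i)) (G1B d) (G1B e).
rewrite B1Bl !B1Br // (B1C e d) //; ring.
Qed.

Lemma G1form_ge0 d : G1_pd R m l n A rho P -> 0 <= G1form R m l n A rho P d.
Proof.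
move=> hpd.
have [[i [hi hd]] | hno] := pselect (exists i, i != ord_max /\ d i != 0).
  by apply/ltW/hpd; exists i.
have z : forall i, i != ord_max -> d i = 0.
  move=> i hi; apply/eqP; apply/negPn/negP => hd; by apply: hno; exists i.
rewrite (G1B d) /B1 big1 ?add0r; last by move=> i hi; rewrite z // vdot0l.
by rewrite big1 // => i hi; rewrite big1 // => j _; rewrite z // vdot0l.
Qed.

Definition hl (al q : 'cV[R]_l) : R :=
  rho / gamma * vdot al al + 2 * ((1 - gamma) / gamma) * vdot al q
  + (gamma * rho)^-1 * vdot q q.

Lemma Hform_split u' y' u y :
  Hform R m l n A rho gamma P u' y' u y =
  G1form R m l n A rho P (fun i => u' i - u i)
  + vdot (u' ord_max - u ord_max) (P ord_max *m (u' ord_max - u ord_max))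
  + hl (A ord_max *m (u' ord_max - u ord_max)) (y' - y).
Proof.
rewrite /Hform /hl /=.
move: (u' ord_max - u ord_max) (y' - y) => dm dy.
rewrite mulmxDl -scalemxAl -mulmxA vdotDr !vdotZr !(vdot_mulmx (A ord_max)^T) trmxK (vdotC dy).
ring.
Qed.

Lemma hl_ge0 al q : 0 < rho -> 0 < gamma < 2 -> 0 <= hl al q.
Proof.
move=> r0 /andP[g0 g2].
have e : hl al q = (gamma * rho)^-1 *
   (vdot (rho *: al + (1 - gamma) *: q) (rho *: al + (1 - gamma) *: q)
    + gamma * (2 - gamma) * vdot q q).
  rewrite /hl !vdotDl !vdotDr !vdotZl !vdotZr (vdotC q al).
  by field; rewrite !lt0r_neq0.
rewrite e; apply: mulr_ge0.
  by rewrite invr_ge0; apply/ltW/mulr_gt0.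
apply: addr_ge0; first exact: vdot_ge0.
apply: mulr_ge0; last exact: vdot_ge0.
by apply: mulr_ge0; lra.
Qed.

Lemma lpart al be dy ey : rho != 0 -> gamma != 0 ->
  rho * vdot al be + (1 - gamma) * vdot al ey + rho^-1 * vdot dy ey - vdot dy be
  - 2^-1 * (hl al (dy - (1 - gamma) *: ey - rho *: be) - hl (al - be) (dy - ey))
  = 2^-1 * ((2 - gamma) / rho * vdot ey ey).
Proof.
move=> r0 g0; rewrite /hl.
rewrite !vdotDl !vdotDr !vdotNl !vdotNr !vdotZl !vdotZr.
rewrite ?(vdotC be al) ?(vdotC ey al) ?(vdotC dy al) ?(vdotC ey be) ?(vdotC dy be) ?(vdotC ey dy).
by field; rewrite r0 g0.
Qed.

End Forms.

Section Step.
Variable R : realType.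
Local Notation vdot := (vdot R).
Variables (m l : nat) (n : 'I_m.+1 -> nat).
Variable A : forall i : 'I_m.+1, 'M[R]_(l, n i).
Variable b : 'cV[R]_l.
Variable theta : forall i : 'I_m.+1, 'cV[R]_(n i) -> R.
Arguments theta : clear implicits.
Variable X : forall i : 'I_m.+1, set 'cV[R]_(n i).
Arguments X : clear implicits.
Variables (rho gamma : R).
Variable P : forall i : 'I_m.+1, 'M[R]_(n i).
Local Notation bv := (forall i : 'I_m.+1, 'cV[R]_(n i)).

Lemma vec_j (q p S1 S2 yk yb : 'cV[R]_l) : rho != 0 ->
  yb = yk - rho *: (q + S2 + p - b) ->
  q + (p + S1 - b - rho^-1 *: yk) = - (rho^-1 *: yb) + (S1 - S2).
Proof.
move=> r0 ->; apply/matrixP => i j; rewrite !mxE; field; exact: r0.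
Qed.

Lemma block_j (x : nat -> bv) (y : nat -> 'cV[R]_l) (k : nat) (j : 'I_m.+1) (u : bv) :
  cvx_fun R (theta j) -> cvx_set R (X j) -> (P j)^T = P j -> 0 < rho ->
  LGADMM_seq R m l n A b theta X rho gamma P x y -> j != ord_max -> X j (u j) ->
  vdot (u j - x k.+1 j) (P j *m (x k j - x k.+1 j))
  + \sum_(i < m.+1 | (i != ord_max) && (i != j))
      vdot (u j - x k.+1 j) ((- rho) *: ((A j)^T *m (A i *m (x k i - x k.+1 i))))
  <= theta j (u j) - theta j (x k.+1 j)
     - vdot (A j *m (u j - x k.+1 j)) (ybar R m l n A b rho x y k).
Proof.
move=> hth hX hP r0 [_ Hk] hj hu; have [Hj _] := Hk k.
set c := \sum_(i < m.+1 | i != j) A i *m x k i - b - rho^-1 *: y k.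
have H : 0 <= theta j (u j) - theta j (x k.+1 j)
   + rho * vdot (A j *m (u j - x k.+1 j)) (A j *m x k.+1 j + c)
   + vdot (u j - x k.+1 j) (P j *m (x k.+1 j - x k j)).
  apply: (argmin_vi hth hX hP _ (Hj j hj) hu) => z.
  by rewrite /c !addrA.
have e1 : \sum_(i < m.+1 | i != j) A i *m x k i =
    A ord_max *m x k ord_max + \sum_(i < m.+1 | (i != ord_max) && (i != j)) A i *m x k i.
  rewrite (bigD1 ord_max) /=; last by rewrite eq_sym.
  by congr (_ + _); apply: eq_bigl => i; rewrite andbC.
have e2 : Asum_R R m l n A (x k.+1) =
    A j *m x k.+1 j + \sum_(i < m.+1 | (i != ord_max) && (i != j)) A i *m x k.+1 i.
  by rewrite /Asum_R (bigD1 j).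
have e3 : \sum_(i < m.+1 | (i != ord_max) && (i != j)) A i *m (x k i - x k.+1 i) =
   \sum_(i < m.+1 | (i != ord_max) && (i != j)) A i *m x k i
   - \sum_(i < m.+1 | (i != ord_max) && (i != j)) A i *m x k.+1 i.
  by rewrite -sumrB; apply: eq_bigr => i _; rewrite mulmxBr.
have r0' : rho != 0 by apply: lt0r_neq0.
have ev : A j *m x k.+1 j + c = - (rho^-1 *: ybar R m l n A b rho x y k)
   + \sum_(i < m.+1 | (i != ord_max) && (i != j)) A i *m (x k i - x k.+1 i).
  rewrite e3 /c e1; apply: vec_j => //.
  by rewrite /ybar e2.
rewrite ev vdotDr vdotNr vdotZr vdot_sumr in H.
rewrite -(opprB (x k j)) mulmxN vdotNr in H.
have es : \sum_(i < m.+1 | (i != ord_max) && (i != j))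
      vdot (u j - x k.+1 j) ((- rho) *: ((A j)^T *m (A i *m (x k i - x k.+1 i))))
  = - rho * \sum_(i < m.+1 | (i != ord_max) && (i != j))
      vdot (A j *m (u j - x k.+1 j)) (A i *m (x k i - x k.+1 i)).
  rewrite mulr_sumr; apply: eq_bigr => i _.
  by rewrite vdotZr vdot_mulmx trmxK.
rewrite es; rewrite mulrDr mulrN mulrA mulfV // mul1r in H; lra.
Qed.

Lemma vec_m (S p q yk yb : 'cV[R]_l) : rho != 0 ->
  yb = yk - rho *: (S + p - b) ->
  q + (gamma *: S + (1 - gamma) *: (b - p) - b - rho^-1 *: yk) =
  - (rho^-1 *: yb) + (rho^-1 * (gamma - 1)) *: (yk - yb) - (p - q).
Proof.
move=> r0 ->; apply/matrixP => i j; rewrite !mxE; field; exact: r0.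
Qed.

Lemma block_m (x : nat -> bv) (y : nat -> 'cV[R]_l) (k : nat) (u : bv) :
  cvx_fun R (theta ord_max) -> cvx_set R (X ord_max) -> (P ord_max)^T = P ord_max ->
  0 < rho ->
  LGADMM_seq R m l n A b theta X rho gamma P x y -> X ord_max (u ord_max) ->
  vdot (u ord_max - x k.+1 ord_max) (P ord_max *m (x k ord_max - x k.+1 ord_max))
  + rho * vdot (A ord_max *m (u ord_max - x k.+1 ord_max))
               (A ord_max *m (x k ord_max - x k.+1 ord_max))
  + (1 - gamma) * vdot (A ord_max *m (u ord_max - x k.+1 ord_max))
               (y k - ybar R m l n A b rho x y k)
  <= theta ord_max (u ord_max) - theta ord_max (x k.+1 ord_max)
     - vdot (A ord_max *m (u ord_max - x k.+1 ord_max)) (ybar R m l n A b rho x y k).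
Proof.
move=> hth hX hP r0 [_ Hk] hu; have [_ [Hm _]] := Hk k.
set c := gamma *: Asum_R R m l n A (x k.+1)
   + (1 - gamma) *: (b - A ord_max *m x k ord_max) - b - rho^-1 *: y k.
have H : 0 <= theta ord_max (u ord_max) - theta ord_max (x k.+1 ord_max)
   + rho * vdot (A ord_max *m (u ord_max - x k.+1 ord_max)) (A ord_max *m x k.+1 ord_max + c)
   + vdot (u ord_max - x k.+1 ord_max) (P ord_max *m (x k.+1 ord_max - x k ord_max)).
  apply: (argmin_vi hth hX hP _ Hm hu) => z.
  congr (_ + _ * _ + _); congr (sqnorm _ _).
  by apply/matrixP => i0 j0; rewrite /c !mxE; ring.
have r0' : rho != 0 by apply: lt0r_neq0.
have ev : A ord_max *m x k.+1 ord_max + c =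
   - (rho^-1 *: ybar R m l n A b rho x y k)
   + (rho^-1 * (gamma - 1)) *: (y k - ybar R m l n A b rho x y k)
   - A ord_max *m (x k ord_max - x k.+1 ord_max).
  by rewrite mulmxBr; apply: vec_m.
rewrite ev vdotBr vdotDr vdotNr !vdotZr in H.
rewrite -(opprB (x k ord_max)) mulmxN vdotNr in H.
have e : forall t s w : R, rho * (- (rho^-1 * t) + rho^-1 * (gamma - 1) * s - w)
   = - t + (gamma - 1) * s - rho * w.
  by move=> t s w; field.
rewrite e in H; lra.
Qed.

Lemma vec_y (S p q yk yb : 'cV[R]_l) : rho != 0 ->
  yb = yk - rho *: (S + p - b) ->
  S + q - b = rho^-1 *: (yk - yb) - (p - q).
Proof. move=> r0 ->; apply/matrixP => i j; rewrite !mxE; field; exact: r0. Qed.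

Lemma vec_y1 (S p q yk yk1 yb v : 'cV[R]_l) :
  yk1 = yk - rho *: (gamma *: S + (1 - gamma) *: (b - p) + q - b) ->
  yb = yk - rho *: (S + p - b) ->
  v - yk1 = (v - yb) - (1 - gamma) *: (yk - yb) - rho *: (p - q).
Proof. move=> -> ->; apply/matrixP => i j; rewrite !mxE; ring. Qed.

Lemma diffE (V : zmodType) (u xk xb : V) : u - xk = (u - xb) - (xk - xb).
Proof. by rewrite opprB addrA subrK. Qed.

Lemma quadP p (M : 'M[R]_p) (a c : 'cV[R]_p) : M^T = M ->
  vdot (a - c) (M *m (a - c)) = vdot a (M *m a) - 2 * vdot a (M *m c) + vdot c (M *m c).
Proof. by move=> hM; rewrite mulmxBr !vdotBl !vdotBr (vdot_sym c a hM); ring. Qed.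

Lemma step (x : nat -> bv) (y : nat -> 'cV[R]_l) (k : nat) (u : bv) (v : 'cV[R]_l) :
  (forall i, cvx_fun R (theta i)) -> (forall i, cvx_set R (X i)) ->
  (forall i, spd R (P i)) -> 0 < rho -> 0 < gamma < 2 ->
  G1_pd R m l n A rho P ->
  LGADMM_seq R m l n A b theta X rho gamma P x y -> in_W R m l n X u v ->
  2^-1 * (Hform R m l n A rho gamma P u v (x k.+1) (y k.+1)
          - Hform R m l n A rho gamma P u v (x k) (y k))
  <= theta_sum R m n theta u - theta_sum R m n theta (x k.+1)
     + VI_term R m l n A b u v (x k.+1) (ybar R m l n A b rho x y k).
Proof.
move=> hth hX hspd r0 hg hpd Hseq hu.
have hP : forall i, (P i)^T = P i by move=> i; case: (hspd i).
have r0' : rho != 0 by apply: lt0r_neq0.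
have g0' : gamma != 0 by case/andP: hg => g0 _; apply: lt0r_neq0.
have Hseq' := Hseq; case: Hseq' => [_ Hk]; have [_ [_ Hy]] := Hk k.
have eL : theta_sum R m n theta u - theta_sum R m n theta (x k.+1)
     + VI_term R m l n A b u v (x k.+1) (ybar R m l n A b rho x y k)
   = \sum_(i < m.+1) (theta i (u i) - theta i (x k.+1 i)
        - vdot (A i *m (u i - x k.+1 i)) (ybar R m l n A b rho x y k))
     + vdot (v - ybar R m l n A b rho x y k) (Asum R m l n A (x k.+1) - b).
  rewrite /theta_sum /VI_term -sumrB addrA -big_split /=; congr (_ + _).
  by apply: eq_bigr => i _; rewrite vdotNr vdot_mulmx trmxK.
rewrite eL (bigD1 ord_max) //=.
have hR : B1 A rho P (fun i => u i - x k.+1 i) (fun i => x k i - x k.+1 i)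
   <= \sum_(i < m.+1 | i != ord_max) (theta i (u i) - theta i (x k.+1 i)
        - vdot (A i *m (u i - x k.+1 i)) (ybar R m l n A b rho x y k)).
  rewrite /B1 -big_split /=; apply: ler_sum => i hi.
  exact: (block_j k (hth i) (hX i) (hP i) r0 Hseq hi (hu i)).
have hM := block_m k (hth ord_max) (hX ord_max) (hP ord_max) r0 Hseq (hu ord_max).
have eA : Asum R m l n A (x k.+1) - b = rho^-1 *: (y k - ybar R m l n A b rho x y k)
     - A ord_max *m (x k ord_max - x k.+1 ord_max).
  rewrite mulmxBr /Asum (bigD1 ord_max) //= addrC; apply: vec_y => //.
have hY : vdot (v - ybar R m l n A b rho x y k) (Asum R m l n A (x k.+1) - b)
   = rho^-1 * vdot (v - ybar R m l n A b rho x y k) (y k - ybar R m l n A b rho x y k)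
     - vdot (v - ybar R m l n A b rho x y k) (A ord_max *m (x k ord_max - x k.+1 ord_max)).
  by rewrite eA [LHS]vdotBr vdotZr.
have ev1 : v - y k.+1 = (v - ybar R m l n A b rho x y k)
     - (1 - gamma) *: (y k - ybar R m l n A b rho x y k)
     - rho *: (A ord_max *m (x k ord_max - x k.+1 ord_max)).
  by rewrite mulmxBr; apply: vec_y1 Hy _.
have H1 := Hform_split A rho gamma P u v (x k.+1) (y k.+1).
rewrite ev1 in H1.
have H0 := Hform_split A rho gamma P u v (x k) (y k).
have eG : (fun i => u i - x k i) = (fun i => (u i - x k.+1 i) - (x k i - x k.+1 i)).
  by apply: functional_extensionality_dep => i; exact: diffE.
rewrite eG G1formB // (diffE (u ord_max) (x k ord_max) (x k.+1 ord_max)) in H0.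
rewrite (diffE v (y k) (ybar R m l n A b rho x y k)) quadP // (mulmxBr (A ord_max)) in H0.
have hl0 := lpart (A ord_max *m (u ord_max - x k.+1 ord_max))
   (A ord_max *m (x k ord_max - x k.+1 ord_max))
   (v - ybar R m l n A b rho x y k) (y k - ybar R m l n A b rho x y k) r0' g0'.
have nG := G1form_ge0 (fun i => x k i - x k.+1 i) hpd.
have nP := spd_ge0 (x k ord_max - x k.+1 ord_max) (hspd ord_max).
have nY : 0 <= (2 - gamma) / rho * vdot (y k - ybar R m l n A b rho x y k)
                                      (y k - ybar R m l n A b rho x y k).
  apply: mulr_ge0; last exact: vdot_ge0.
  by apply: divr_ge0; [case/andP: hg => _ g2; lra | apply: ltW].
lra.
Qed.

End Step.

Section Final.
Variable R : realType.
Local Notation vdot := (vdot R).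
Variables (m l : nat) (n : 'I_m.+1 -> nat).
Variable A : forall i : 'I_m.+1, 'M[R]_(l, n i).
Variable b : 'cV[R]_l.
Local Notation bv := (forall i : 'I_m.+1, 'cV[R]_(n i)).

Lemma VI1 (u' u : bv) y : \sum_(i < m.+1) vdot (u' i - u i) (- ((A i)^T *m y))
  = - vdot (Asum R m l n A u' - Asum R m l n A u) y.
Proof.
rewrite /Asum -sumrB vdot_suml -sumrN; apply: eq_bigr => i _.
by rewrite vdotNr vdot_mulmx trmxK mulmxBr.
Qed.

Lemma skew_alg (p q bb y y' : 'cV[R]_l) :
  - vdot (p - q) y + vdot (y' - y) (q - bb) = - (- vdot (q - p) y' + vdot (y - y') (p - bb)).
Proof.
rewrite !vdotBl !vdotBr.
rewrite ?(vdotC y p) ?(vdotC y q) ?(vdotC y' p) ?(vdotC y' q).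
ring.
Qed.

Lemma VI_skew (u' u : bv) y' y :
  VI_term R m l n A b u' y' u y = - VI_term R m l n A b u y u' y'.
Proof. by rewrite /VI_term !VI1 skew_alg. Qed.

Lemma tele (a h : nat -> R) N : (forall k, 2^-1 * (h k.+1 - h k) <= a k) ->
  2^-1 * (h N - h 0%N) <= \sum_(k < N) a k.
Proof.
move=> H; elim: N => [|N IH]; first by rewrite big_ord0 subrr mulr0.
rewrite big_ord_recr /=; have := H N; lra.
Qed.

Lemma avg_vdot p (z : nat -> 'cV[R]_p) w g N :
  vdot ((N.+1%:R)^-1 *: \sum_(j < N.+1) z j - w) g
  = (N.+1%:R)^-1 * \sum_(j < N.+1) vdot (z j - w) g.
Proof.
rewrite vdotBl vdotZl vdot_suml.
under [in RHS]eq_bigr => j _ do rewrite vdotBl.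
rewrite sumrB sumr_const card_ord -mulr_natr.
have h : (N.+1%:R : R) != 0 by rewrite pnatr_eq0.
by field.
Qed.

End Final.

Theorem theorem4p1 (R : realType) (m l : nat) (n : 'I_m.+1 -> nat)
  (A : forall i : 'I_m.+1, 'M[R]_(l, n i)) (b : 'cV[R]_l)
  (theta : forall i : 'I_m.+1, 'cV[R]_(n i) -> R)
  (X : forall i : 'I_m.+1, set 'cV[R]_(n i))
  (rho gamma : R) (P : forall i : 'I_m.+1, 'M[R]_(n i))
  (x : nat -> block_vec R m n) (y : nat -> 'cV[R]_l) (t : nat) :
  (1 <= m)%N -> (0 < l)%N -> (forall i, (0 < n i)%N) ->
  (forall i, cvx_fun R (theta i)) ->
  (forall i, X i !=set0 /\ closed (X i) /\ cvx_set R (X i)) ->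
  (forall i, \rank (A i) = n i) ->
  (* problem (P) has a nonempty solution set *)
  (exists us : block_vec R m n,
     (forall i, X i (us i)) /\ Asum R m l n A us = b /\
     forall u : block_vec R m n, (forall i, X i (u i)) -> Asum R m l n A u = b ->
       theta_sum R m n theta us <= theta_sum R m n theta u) ->
  (* W^* is nonempty *)
  (exists (us : block_vec R m n) (ys : 'cV[R]_l),
     in_Wstar R m l n A b theta X us ys) ->
  0 < rho -> 0 < gamma < 2 ->
  (forall i, spd R (P i)) ->
  G1_pd R m l n A rho P ->
  LGADMM_seq R m l n A b theta X rho gamma P x y ->
  (0 < t)%N ->
  in_W R m l n X (xavg R m n x t) (yavg R m l n A b rho x y t) /\
  forall (u : block_vec R m n) (v : 'cV[R]_l), in_W R m l n X u v ->
    theta_sum R m n theta (xavg R m n x t) - theta_sum R m n theta u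
    + VI_term R m l n A b (xavg R m n x t) (yavg R m l n A b rho x y t) u v
    <= (2 * t.+1%:R)^-1 * Hform R m l n A rho gamma P u v (x 0%N) (y 0%N).
Proof.
move=> _ _ _ hth hXall _ _ _ r0 hg hspd hpd Hseq _.
have hX : forall i, cvx_set R (X i) by move=> i; case: (hXall i) => _ [].
have Hseq' := Hseq; case: Hseq' => [_ Hk].
split.
  move=> i; rewrite /xavg.
  apply: (avg_in (z := fun j => xbar R m n x j i)) => // j _.
  rewrite /xbar; have [Hj [Hm _]] := Hk j.
  have [->|hi] := eqVneq i ord_max; first by case: Hm.
  by case: (Hj i hi).
move=> u v hu.
set c := (t.+1%:R : R)^-1.
set H := fun k => Hform R m l n A rho gamma P u v (x k) (y k).
set Th := \sum_(k < t.+1) theta_sum R m n theta (x k.+1).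
set V := \sum_(k < t.+1) VI_term R m l n A b (x k.+1) (ybar R m l n A b rho x y k) u v.
have hs : forall k, 2^-1 * (H k.+1 - H k) <=
   theta_sum R m n theta u - theta_sum R m n theta (x k.+1)
   - VI_term R m l n A b (x k.+1) (ybar R m l n A b rho x y k) u v.
  move=> k; rewrite /H -VI_skew.
  exact: (step k hth hX hspd r0 hg hpd Hseq hu).
have htel := tele t.+1 hs.
have eS : \sum_(k < t.+1) (theta_sum R m n theta u - theta_sum R m n theta (x k.+1)
   - VI_term R m l n A b (x k.+1) (ybar R m l n A b rho x y k) u v)
   = t.+1%:R * theta_sum R m n theta u - Th - V.
  by rewrite !sumrB sumr_const card_ord mulr_natl.
rewrite eS in htel.
have hHt : 0 <= H t.+1.
  rewrite /H Hform_split; apply: addr_ge0; first apply: addr_ge0.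
  - exact: G1form_ge0.
  - exact: spd_ge0.
  - exact: hl_ge0.
have hJ : theta_sum R m n theta (xavg R m n x t) <= c * Th.
  rewrite /Th /theta_sum. rewrite [X in _ <= _ * X]exchange_big mulr_sumr; apply: ler_sum => i _.
  exact: (jensen (fun j => xbar R m n x j i) t (hth i)).
have hV : VI_term R m l n A b (xavg R m n x t) (yavg R m l n A b rho x y t) u v = c * V.
  rewrite /V /VI_term big_split /= exchange_big mulrDr mulr_sumr.
  congr (_ + _); last exact: (avg_vdot (fun j => ybar R m l n A b rho x y j)).
  by apply: eq_bigr => i _; exact: (avg_vdot (fun j => xbar R m n x j i)).
have c0 : 0 <= c by rewrite /c invr_ge0 ler0n.
have hm : c * (Th + V) <= c * (t.+1%:R * theta_sum R m n theta u + 2^-1 * H 0%N).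
  apply: ler_wpM2l => //; lra.
have ef : c * (t.+1%:R * theta_sum R m n theta u + 2^-1 * H 0%N)
   = theta_sum R m n theta u + (2 * t.+1%:R)^-1 * H 0%N.
  by rewrite /c; field; apply/lt0r_neq0; have := ler0n R t; lra.
rewrite mulrDr ef in hm.
rewrite hV; rewrite /H /= in hm.
move: hm hJ; move: (Hform R m l n A rho gamma P u v (x 0%N) (y 0%N)) => HH.
move: (theta_sum R m n theta (xavg R m n x t)) (theta_sum R m n theta u) => a1 a2.
move: (c * V) (c * Th) ((2 * t.+1%:R)^-1 * HH) => a3 a4 a5.
lra.
Qed.
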